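(* Let $I,S\ge 0$ and $j\ge 2$ be integers with $I>S$, $I+S$ odd and $j=\frac{I-S-1}{2}$, and consider the pairing process described in the context. For $1\le h\le I$, let $N_\dagger(I,S,h)$ be the number of distinct sets of bb-pairings that arise as the set of bb-pairings of a possible wiring in which $b_h$ is left unpaired. Then: $N_\dagger(I,S,I)=\frac{1}{j!}\prod_{k=0}^{j-1}\binom{I-1-2k}{2}$; $N_\dagger(I,S,I-1)=\frac{1}{(j-1)!}(I-2)\prod_{k=0}^{j-2}\binom{I-3-2k}{2}$; for $S+1\le h\le I-2$: $N_\dagger(I,S,h)=0$ if $j<I-h$, $N_\dagger(I,S,h)=\frac{1}{(j-I+h)!}\prod_{t=1}^{I-h}(h-t)$ if $j=I-h$, and $N_\dagger(I,S,h)=\frac{1}{(j-I+h)!}\prod_{t=1}^{I-h}(h-t)\prod_{t=1}^{j-I+h}\binom{2h-I-1-2(t-1)}{2}$ if $j>I-h$; and $N_\dagger(I,S,h)=0$ for $h\le S$.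
   Context: Pairing process: there are $I$ infected devices $b_1,\dots,b_I$ and $S$ clean devices $w_1,\dots,w_S$. For $t=1,\dots,I$ in this order: if $b_t$ is not yet paired and at least one device other than $b_t$ is not yet paired, then $b_t$ chooses one of the currently unpaired devices other than itself uniformly at random, independently of previous choices, and becomes paired with it; otherwise $b_t$ does nothing. Each device belongs to at most one pair. The wiring is the final set of pairs; a bb-pairing is a pair consisting of two infected devices; a wiring is possible if it occurs with positive probability. Under the hypotheses, every possible wiring with exactly $j$ bb-pairings leaves exactly one infected device unpaired. *)

(* Defs.v *)
From mathcomp Require Import all_boot all_algebra.
Set Implicit Arguments. Unset Strict Implicit. Unset Printing Implicit Defensive.

(* Devices: inl i is the infected device b_(i+1) (0-based index i < I),
   inr k is the clean device w_(k+1).  A (partial) wiring is a set of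
   2-element sets of devices. *)
Definition dev (I S : nat) := ('I_I + 'I_S)%type.

Definition infected I S (x : dev I S) : bool := if x is inl _ then true else false.

Definition paired I S (M : {set {set dev I S}}) (x : dev I S) : bool :=
  [exists p in M, x \in p].

(* All possible outcomes (positive-probability) of the move of device b
   from the current set of pairs M. *)
Definition step I S (b : dev I S) (M : {set {set dev I S}}) : {set {set {set dev I S}}} :=
  let U := [set y | (y != b) && ~~ paired M y] in
  if paired M b || (U == set0) then [set M]
  else [set [set b; y] |: M | y in U].

(* reachable I S t : the sets of pairs that occur with positive probability
   after infected devices b_1, ..., b_t have acted (in this order). *)
Fixpoint reachable I S (t : nat) : {set {set {set dev I S}}} :=
  match t with
  | 0 => [set set0]
  | t'.+1 =>
      let R := reachable I S t' in
      if (insub t' : option 'I_I) is Some i then \bigcup_(M in R) step (inl i : dev I S) M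
      else R
  end.

Definition possible_wiring I S (M : {set {set dev I S}}) : bool :=
  M \in reachable I S I.

Definition bb_pairings I S (M : {set {set dev I S}}) : {set {set dev I S}} :=
  [set p in M | [forall x in p, infected x]].

(* N_dagger I S h, for 1 <= h <= I: number of distinct sets of bb-pairings of
   possible wirings in which b_h is unpaired (b_h is inl (h-1)). *)
Definition N_dagger I S (h : nat) : nat :=
  if (insub h.-1 : option 'I_I) is Some i then
    #|[set B : {set {set dev I S}} | [exists M, possible_wiring M &&
        ~~ paired M (inl i : dev I S) && (B == bb_pairings M)]]|
  else 0.

(* Main.v *)
Require Import Defs.
From mathcomp Require Import all_boot all_algebra.
From mathcomp Require Import zify ring.
Set Implicit Arguments. Unset Strict Implicit. Unset Printing Implicit Defensive.


Definition pdisj (T : finType) (B : {set {set T}}) :=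
  [forall p in B, forall q in B, (p == q) || [disjoint p & q]].

Lemma pdisjP (T : finType) (B : {set {set T}}) p q x :
  pdisj B -> p \in B -> q \in B -> x \in p -> x \in q -> p = q.
Proof.
move=> /forallP/(_ p)/implyP H pB qB xp xq.
move: (H pB) => /forallP/(_ q)/implyP/(_ qB)/orP [/eqP //|].
by move/disjointFr => /(_ x xp); rewrite xq.
Qed.

Lemma sum_mem_cover (T : finType) (B : {set {set T}}) x :
  pdisj B -> \sum_(p in B) (x \in p : nat) = [exists p in B, x \in p].
Proof.
move=> dB; case: existsP => [[p /andP [pB xp]]|nex].
  rewrite (bigD1 p pB) /= xp big1 // => q /andP [qB qp].
  case xq: (x \in q) => //; by rewrite (pdisjP dB pB qB xp xq) eqxx in qp.
rewrite big1 // => q qB; case xq: (x \in q) => //.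
by case: nex; exists q; rewrite qB xq.
Qed.

Lemma sum_card_cover (T : finType) (B : {set {set T}}) (X : {set T}) :
  pdisj B -> \sum_(p in B) #|p :&: X| =
             #|[set x in X | [exists p in B, x \in p]]|.
Proof.
move=> dB.
transitivity (\sum_(p in B) \sum_(x in X) (x \in p : nat)).
  apply: eq_bigr => p _; rewrite -sum1_card big_mkcond /= [RHS]big_mkcond /=.
  by apply: eq_bigr => x _; rewrite inE; case: (x \in p); case: (x \in X).
rewrite exchange_big /= -sum1_card big_mkcond /= [RHS]big_mkcond /=.
apply: eq_bigr => x _; rewrite inE; case: (x \in X) => //.
by rewrite sum_mem_cover.
Qed.


Definition good (T : finType) (A L : {set T}) (B : {set {set T}}) : bool :=
  [&& [forall p in B, [&& #|p| == 2, p \subset A :|: L & p :&: A != set0]],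
      pdisj B & [forall x in L, exists p in B, x \in p]].

Definition cnt (T : finType) (A L : {set T}) n :=
  #|[set B | good A L B && (#|B| == n)]|.

Lemma card_pair (T : finType) (p : {set T}) (P Q : pred {set {set T}}) :
  (forall B', Q B' -> (p \notin B') && P (p |: B')) ->
  (forall B, P B -> p \in B -> Q (B :\ p)) ->
  #|[set B | P B && (p \in B)]| = #|[set B | Q B]|.
Proof.
move=> H1 H2.
rewrite -(@card_in_imset _ _ (fun B' => p |: B') [set B | Q B]).
  apply: eq_card => B; rewrite inE; apply/andP/imsetP.
    move=> [PB pB]; exists (B :\ p); first by rewrite inE H2.
    by rewrite setD1K.
  move=> [B' + ->]; rewrite inE => /H1 /andP [_ ->]; by rewrite setU11.
move=> B1 B2; rewrite !inE => /H1/andP [n1 _] /H1/andP [n2 _] E.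
by rewrite -(setU1K n1) E setU1K.
Qed.

Section GoodLemmas.
Variable T : finType.
Implicit Types (A L : {set T}) (B : {set {set T}}).

Lemma pdisjI B : (forall p q x, p \in B -> q \in B -> x \in p -> x \in q -> p = q) -> pdisj B.
Proof.
move=> H; apply/forallP => p; apply/implyP => pB; apply/forallP => q; apply/implyP => qB.
case: eqP => //= npq; apply/pred0P => x /=; apply/negbTE/negP => /andP [xp xq].
by apply: npq; apply: H xp xq.
Qed.

Lemma good_pair A L B p : good A L B -> p \in B ->
  [/\ #|p| = 2, p \subset A :|: L & exists2 a, a \in A & a \in p].
Proof.
case/and3P => /forallP /(_ p) /implyP H _ _ /H /and3P [/eqP -> -> /set0Pn [a]].
by rewrite inE => /andP [ap aA]; split => //; exists a.
Qed.

Lemma good_disj A L B : good A L B -> pdisj B.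
Proof. by case/and3P. Qed.

Lemma good_cov A L B x : good A L B -> x \in L -> exists2 p, p \in B & x \in p.
Proof.
case/and3P => _ _ /forallP /(_ x) /implyP H /H /existsP [p /andP [pB xp]].
by exists p.
Qed.

Lemma goodI A L B :
  (forall p, p \in B -> [/\ #|p| = 2, p \subset A :|: L & exists2 a, a \in A & a \in p]) ->
  pdisj B -> (forall x, x \in L -> exists2 p, p \in B & x \in p) -> good A L B.
Proof.
move=> H1 H2 H3; apply/and3P; split => //.
  apply/forallP => p; apply/implyP => /H1 [-> -> [a aA ap]]; rewrite eqxx /=.
  by apply/set0Pn; exists a; rewrite inE ap aA.
apply/forallP => x; apply/implyP => /H3 [p pB xp]; apply/existsP; exists p.
by rewrite pB xp.
Qed.

Lemma pair_remove A L y z n : [disjoint A & L] -> z \in A -> y \in A :|: L -> y != z ->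
  #|[set B | (good A L B && (#|B| == n.+1)) && ([set y; z] \in B)]|
  = cnt (A :\ z :\ y) (L :\ y) n.
Proof.
move=> dAL zA yAL nyz.
have zL : z \notin L by rewrite (disjointFr dAL zA).
apply: (card_pair (P := fun B => good A L B && (#|B| == n.+1))
                 (Q := fun B => good (A :\ z :\ y) (L :\ y) B && (#|B| == n))).
- move=> B' /andP [gB' /eqP cB'].
  have pnB : [set y; z] \notin B'.
    apply/negP => /(good_pair gB') [_ /subsetP /(_ y) + _].
    by rewrite !inE eqxx /= => /(_ isT).
  rewrite pnB /= cardsU1 pnB cB' eqxx andbT.
  have avoid : forall q x, q \in B' -> x \in q -> (x != y) && (x != z).
    move=> q x /(good_pair gB') [_ /subsetP /(_ x) + _] xq.
    move=> /(_ xq); rewrite !inE; case/orP => [/and3P [-> -> _] //|/andP [-> xL]] /=.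
    by apply: contraTneq xL => ->.
  apply: goodI.
  + move=> q; rewrite in_setU1 => /orP [/eqP ->|qB].
      split; first by rewrite cards2 nyz.
        by apply/subsetP => x; rewrite !inE => /orP [] /eqP ->; rewrite ?zA // -in_setU.
      by exists z; rewrite // !inE eqxx orbT.
    case: (good_pair gB' qB) => -> /subsetP sq [a aA aq]; split => //.
      by apply/subsetP => x /sq; rewrite !inE => /orP [/and3P [_ _ ->]|/andP [_ ->]]; rewrite ?orbT.
    by exists a => //; move: aA; rewrite !inE => /and3P [].
  + apply: pdisjI => q1 q2 x; rewrite !in_setU1.
    have dB' := good_disj gB'.
    case/orP => [/eqP ->|q1B]; case/orP => [/eqP ->|q2B] //.
    * move=> xp xq2; move: (avoid _ _ q2B xq2); move: xp; rewrite !inE.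
      by case/orP => /eqP ->; rewrite eqxx ?andbF.
    * move=> xq1 xp; move: (avoid _ _ q1B xq1); move: xp; rewrite !inE.
      by case/orP => /eqP ->; rewrite eqxx ?andbF.
    * by move=> xq1 xq2; apply: (pdisjP dB' q1B q2B xq1 xq2).
  + move=> x xL; case: (eqVneq x y) => [->|nxy].
      by exists [set y; z]; rewrite ?setU11 // !inE eqxx.
    have : x \in L :\ y by rewrite !inE nxy.
    by case/(good_cov gB') => q qB xq; exists q; rewrite // in_setU1 qB orbT.
- move=> B /andP [gB /eqP cB] pB.
  have dB := good_disj gB.
  have cB' : #|B :\ [set y; z]| = n by move: cB; rewrite (cardsD1 [set y; z] B) pB => [[]].
  rewrite cB' eqxx andbT.
  have avoid : forall q x, q \in B :\ [set y; z] -> x \in q -> (x != y) && (x != z).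
    move=> q x; rewrite !inE => /andP [nqp qB] xq.
    apply/andP; split; apply/negP => /eqP E; subst x;
     apply/negP: nqp; apply/negPn/eqP;
     apply: (pdisjP dB qB pB xq); by rewrite !inE eqxx ?orbT.
  apply: goodI.
  + move=> q qB'; have qB : q \in B by move: qB'; rewrite inE => /andP [].
    case: (good_pair gB qB) => -> /subsetP sq [a aA aq]; split => //.
      apply/subsetP => x xq; move: (avoid _ _ qB' xq) (sq _ xq).
      by rewrite !inE => /andP [-> ->] /=.
    exists a => //; move: (avoid _ _ qB' aq) => /andP [ay az].
    by rewrite !inE ay az.
  + apply: pdisjI => q1 q2 x; rewrite !inE => /andP [_ q1B] /andP [_ q2B].
    exact: pdisjP dB q1B q2B.
  + move=> x; rewrite !inE => /andP [nxy xL].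
    case: (good_cov gB xL) => q qB xq; exists q => //.
    rewrite !inE qB andbT; apply/negP => /eqP E; move: xq; rewrite E !inE.
    rewrite (negbTE nxy) /= => /eqP E2; subst x; by rewrite xL in zL.
Qed.

End GoodLemmas.


Lemma card_setE (U : finType) (R : pred U) : #|[set B | R B]| = \sum_B (R B : nat).
Proof.
rewrite -sum1_card big_mkcond; apply: eq_bigr => B _; rewrite inE; by case: (R B).
Qed.

Lemma card_partition (U J : finType) (P : pred U) (D : {pred J}) (Q : J -> pred U) :
  (forall B, P B -> \sum_(z in D) (Q z B : nat) = 1) ->
  #|[set B | P B]| = \sum_(z in D) #|[set B | P B && Q z B]|.
Proof.
move=> H; rewrite card_setE.
under [RHS]eq_bigr => z _ do rewrite card_setE.
rewrite exchange_big /=; apply: eq_bigr => B _.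
case PB: (P B) => /=; first by rewrite H.
by rewrite big1.
Qed.

Lemma setD1_notin (T : finType) (A : {set T}) y : y \notin A -> A :\ y = A.
Proof.
move=> yA; apply/setP => x; rewrite !inE; case: eqVneq => // ->.
by rewrite (negbTE yA).
Qed.

Lemma sum_partner (T : finType) (A L : {set T}) B y (D : {set T}) :
  good A L B -> y \notin D -> (forall z, [set y; z] \in B -> z \in D) ->
  \sum_(z in D) ([set y; z] \in B : nat) = [exists p in B, y \in p].
Proof.
move=> gB yD HD; have dB := good_disj gB.
case: existsP => [[p /andP [pB yp]]|nex]; last first.
  rewrite big1 // => z _; case E: ([set y; z] \in B) => //.
  by case: nex; exists [set y; z]; rewrite E setU11.
have [z0 pE] : exists z0, p = [set y; z0].
  case: (good_pair gB pB) => /eqP /cards2P [a [b [nab pab]]] _ _.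
  move: yp; rewrite pab !inE => /orP [] /eqP ->; first by exists b.
  by exists a; rewrite setUC.
have z0D : z0 \in D by apply: HD; rewrite -pE.
rewrite (bigD1 z0 z0D) /= -pE pB big1 // => z /andP [zD nz].
case E: ([set y; z] \in B) => //.
have := pdisjP dB E pB (setU11 _ _) yp; rewrite pE => E2.
have : z \in [set y; z0] by rewrite -E2 !inE eqxx orbT.
rewrite !inE => /orP [/eqP zy|/eqP zz0]; last by rewrite zz0 eqxx in nz.
by subst z; case/negP: yD.
Qed.

Lemma cnt_L (T : finType) (A L : {set T}) y n : [disjoint A & L] -> y \in L ->
  cnt A L n.+1 = \sum_(z in A) cnt (A :\ z) (L :\ y) n.
Proof.
move=> dAL yL.
have yA : y \notin A by rewrite (disjointFl dAL yL).
rewrite /cnt (card_partition (U := {set {set T}}) (D := A) (Q := fun z B => [set y; z] \in B)).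
  apply: eq_bigr => z zA.
  rewrite -(setD1_notin (A := A :\ z) (y := y)); last by rewrite !inE (negbTE yA) andbF.
  apply: pair_remove => //; first by rewrite inE yL orbT.
  by apply: contraNneq yA => ->.
move=> B /andP [gB _]; rewrite (sum_partner gB yA).
  suff -> : [exists p in B, y \in p] by [].
  by apply/existsP; case: (good_cov gB yL) => p pB yp; exists p; rewrite pB yp.
move=> z /(good_pair gB) [_ _ [a aA]]; rewrite !inE => /orP [] /eqP E; subst a => //.
by rewrite aA in yA.
Qed.

Lemma cnt_L0 (T : finType) (A L : {set T}) : L != set0 -> cnt A L 0 = 0.
Proof.
case/set0Pn => y yL; apply/eqP; rewrite cards_eq0; apply/eqP/setP => B.
rewrite !inE cards_eq0; apply/negP => /andP [gB /eqP B0].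
by case: (good_cov gB yL) => p; rewrite B0 inE.
Qed.

Lemma cnt_A0 (T : finType) (A : {set T}) y n : y \in A ->
  cnt A set0 n.+1 = cnt (A :\ y) set0 n.+1 + \sum_(z in A :\ y) cnt (A :\ z :\ y) set0 n.
Proof.
move=> yA; rewrite /cnt.
rewrite -(cardsID [set B : {set {set T}} | [exists p in B, y \in p]]).
rewrite addnC; congr (_ + _).
  apply: eq_card => B; rewrite !inE; apply/idP/idP.
    case/and3P => nex gB ->; rewrite andbT.
    have avoid : forall p x, p \in B -> x \in p -> x != y.
      move=> p x pB xp; apply: contraNneq nex => E; subst x.
      by apply/existsP; exists p; rewrite pB xp.
    apply: goodI.
    - move=> p pB; case: (good_pair gB pB) => -> /subsetP sp [a aA ap]; split => //.
        apply/subsetP => x xp; move: (sp _ xp); rewrite !inE (avoid _ _ pB xp).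
        by rewrite orbF.
      by exists a; rewrite // !inE (avoid _ _ pB ap).
    - exact: good_disj gB.
    - by move=> x; rewrite inE.
  case/andP => gB ->; rewrite andbT.
  suff : ~~ [exists p in B, y \in p] && good A set0 B by case/andP => -> ->.
  have avoid : forall p x, p \in B -> x \in p -> x != y.
    move=> p x /(good_pair gB) [_ /subsetP sp _] /sp.
    by rewrite !inE => /orP [/andP [] | //].
  apply/andP; split.
    apply/negP => /existsP [p /andP [pB yp]].
    by move: (avoid _ _ pB yp); rewrite eqxx.
  apply: goodI.
  - move=> p pB; case: (good_pair gB pB) => -> /subsetP sp [a aA ap]; split => //.
      apply/subsetP => x /sp; rewrite !inE orbF => /andP [_ ->] //.
    by exists a; move: aA; rewrite // !inE => /andP [].
  - exact: good_disj gB.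
  - by move=> x; rewrite inE.
have -> : [set B | good A set0 B && (#|B| == n.+1)] :&: [set B : {set {set T}} | [exists p in B, y \in p]]
  = [set B : {set {set T}} | (good A set0 B && (#|B| == n.+1)) && [exists p in B, y \in p]].
  by apply/setP => B; rewrite !inE.
rewrite (card_partition (U := {set {set T}}) (D := A :\ y) (Q := fun z B => [set y; z] \in B)).
  apply: eq_bigr => z zA.
  have -> : [set B : {set {set T}} | ((good A set0 B && (#|B| == n.+1)) && [exists p in B, y \in p]) && ([set y; z] \in B)]
    = [set B | (good A set0 B && (#|B| == n.+1)) && ([set y; z] \in B)].
    apply/setP => B; rewrite !inE; case E: ([set y; z] \in B); rewrite ?andbF ?andbT //.
    apply/andP/idP => [[] //|H]; split => //.
    by apply/existsP; exists [set y; z]; rewrite E setU11.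
  rewrite pair_remove //; first by rewrite set0D.
  - by apply/pred0P => x; rewrite /= inE andbF.
  - by move: zA; rewrite inE => /andP [].
  - by rewrite !inE yA.
  - by move: zA; rewrite !inE eq_sym => /andP [].
move=> B /andP [/andP [gB _] ex]; rewrite (sum_partner gB) ?ex //.
  by rewrite !inE eqxx.
move=> z /(good_pair gB) [/eqP c2 /subsetP sp _].
have zp : z \in [set y; z] by rewrite !inE eqxx orbT.
move: (sp _ zp); rewrite !inE orbF => ->; rewrite andbT.
by apply: contraTneq c2 => ->; rewrite setUid cards1.
Qed.


Fixpoint mt (m k : nat) {struct m} : nat :=
  match k with
  | 0 => 1
  | k'.+1 => match m with
             | 0 => 0
             | m'.+1 => mt m' k'.+1 + m' * (match m' with 0 => 0 | m''.+1 => mt m'' k' end)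
             end
  end.

Lemma mt0 m : mt m 0 = 1. Proof. by case: m. Qed.
Lemma mt0S k : mt 0 k.+1 = 0. Proof. by []. Qed.
Lemma mtSS m k : mt m.+1 k.+1 = mt m k.+1 + m * mt m.-1 k.
Proof. by case: m. Qed.

Lemma mt_ffact m k : 2 ^ k * k`! * mt m k = m ^_ (2 * k).
Proof.
elim: m {-2}m (leqnn m) k => [|N IH] m.
  rewrite leqn0 => /eqP -> [|k]; first by rewrite mt0 ffactn0.
  by rewrite mt0S muln0 ffact0n mulnS.
case: m => [|m] Hm [|k].
- by rewrite mt0 ffactn0.
- by rewrite mt0S muln0 ffact0n mulnS.
- by rewrite mt0 ffactn0 muln1 expn0.
rewrite mtSS mulnDr.
have e1 := IH m Hm k.+1.
rewrite e1.
have e2 : 2 ^ k.+1 * k.+1`! * (m * mt m.-1 k) = 2 * k.+1 * (m * m.-1 ^_ (2 * k)).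
  rewrite -(IH m.-1 _ k); last by apply: leq_trans (leq_pred m) Hm.
  rewrite factS expnS; ring.
have e3 : 2 * k.+1 = (2 * k).+2 by lia.
rewrite e2 -ffactnS e3 ffactnSr ffactSS.
case: (ltnP m (2 * k).+1) => H.
  by rewrite ffact_small // !(muln0, mul0n, addn0).
have E : m - (2 * k).+1 + (2 * k).+2 = m.+1 by lia.
by rewrite mulnC -mulnDl E.
Qed.

Lemma prodC_ffact m k : 2 ^ k * \prod_(t < k) 'C(m - 2 * t, 2) = m ^_ (2 * k).
Proof.
elim: k m => [|k IH] m; first by rewrite big_ord0 ffactn0.
rewrite big_ord_recl /= muln0 subn0.
have -> : \prod_(i < k) 'C(m - 2 * (bump 0 i), 2) = \prod_(i < k) 'C(m.-2 - 2 * i, 2).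
  apply: eq_bigr => i _; congr 'C(_, 2); rewrite /bump /=; lia.
have e3 : 2 * k.+1 = (2 * k).+2 by lia.
set P := \prod_(i < k) _.
have -> : 2 ^ k.+1 * ('C(m, 2) * P) = 2 * 'C(m, 2) * (2 ^ k * P) by rewrite expnS; ring.
rewrite IH e3 !ffactnS mulnA; congr (_ * _).
rewrite bin2; clear P; case: m => [|m] //=.
have h : odd (m.+1 * m) = false by rewrite oddM /=; case: (odd m).
by rewrite -{2}(odd_double_half (m.+1 * m)) h add0n mul2n.
Qed.

Lemma mt_prod m k : k`! * mt m k = \prod_(t < k) 'C(m - 2 * t, 2).
Proof.
apply/eqP; rewrite -(@eqn_pmul2l (2 ^ k)) ?expn_gt0 //.
by rewrite mulnA mt_ffact prodC_ffact.
Qed.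

Lemma cnt_set00 (T : finType) (A : {set T}) : cnt A set0 0 = 1.
Proof.
rewrite /cnt -(cards1 (set0 : {set {set T}})); apply: eq_card => B.
rewrite !inE cards_eq0; apply/andP/eqP => [[_ /eqP //]|->]; split => //.
apply: goodI => [p|| x]; rewrite ?inE //.
by apply: pdisjI => p q x; rewrite inE.
Qed.

Lemma cnt_formula (T : finType) (A L : {set T}) n : [disjoint A & L] ->
  cnt A L n = if #|L| <= n then #|A| ^_ #|L| * mt (#|A| - #|L|) (n - #|L|) else 0.
Proof.
elim: {L}#|L| {-2}L (eqxx #|L|) A n => [|l IH] L.
  rewrite cards_eq0 => /eqP -> {L} A n _; rewrite cards0 leq0n ffactn0 mul1n !subn0.
  elim: {A}#|A| {-2}A (leqnn #|A|) n => [|N IHA] A.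
    rewrite leqn0 cards_eq0 => /eqP -> [|n]; first by rewrite cnt_set00 cards0 mt0.
    rewrite cards0 mt0S; apply/eqP; rewrite cards_eq0; apply/eqP/setP => B.
    rewrite !inE; apply/negP => /andP [gB /eqP cB].
    have : B != set0 by rewrite -card_gt0 cB.
    case/set0Pn => p /(good_pair gB) [_ + [a]]; by rewrite inE.
  move=> HA [|n]; first by rewrite cnt_set00 mt0.
  case: (set_0Vmem A) => [->|[y yA]]; first by apply: IHA; rewrite cards0.
  rewrite (cnt_A0 _ yA) (cardsD1 y A) yA add1n mtSS IHA; last by move: HA; rewrite (cardsD1 y A) yA.
  congr (_ + _).
  rewrite (eq_bigr (fun _ => mt (#|A :\ y|).-1 n)); last first.
    move=> z zA.
    have -> : A :\ z :\ y = A :\ y :\ z.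
      by apply/setP => x; rewrite !inE; case: (x == y); case: (x == z).
    rewrite IHA; first by rewrite (cardsD1 z (A :\ y)) zA.
    by move: HA; rewrite (cardsD1 y A) yA (cardsD1 z (A :\ y)) zA /= => /ltnW.
  by rewrite sum_nat_const.
move=> /eqP cL A [|n] dAL.
  rewrite cnt_L0 ?cL //; by rewrite -card_gt0 cL.
have [y yL] : exists y, y \in L by apply/set0Pn; rewrite -card_gt0 cL.
rewrite (cnt_L _ dAL yL) cL ltnS.
have cL' : #|L :\ y| = l by move: cL; rewrite (cardsD1 y L) yL => [[]].
rewrite (eq_bigr (fun _ => if l <= n then #|A|.-1 ^_ l * mt (#|A|.-1 - l) (n - l) else 0)).
  rewrite sum_nat_const; case: ifP => _; last by rewrite muln0.
  rewrite mulnA -ffactnS; congr (_ * mt _ _); lia.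
move=> z zA; rewrite IH ?cL' //.
  by rewrite (cardsD1 z A) zA.
apply/pred0P => x /=; rewrite !inE.
case xL: (x \in L); rewrite ?andbF ?andbT //.
by rewrite (disjointFl dAL xL) andbF.
Qed.


Lemma pairedP I S (M : {set {set dev I S}}) x :
  reflect (exists2 p, p \in M & x \in p) (paired M x).
Proof.
apply: (iffP existsP) => [[p /andP [pM xp]]|[p pM xp]]; exists p => //.
by rewrite pM xp.
Qed.

Definition Inv I S t (M : {set {set dev I S}}) :=
  [/\ forall p, p \in M -> #|p| = 2 /\ exists s : 'I_I, (s < t)%N /\ (inl s : dev I S) \in p,
      pdisj M &
      forall s : 'I_I, (s < t)%N -> ~~ paired M (inl s : dev I S) ->
        (forall y, y != inl s -> paired M y) /\
        (forall p, p \in M -> exists s' : 'I_I, (s' < s)%N /\ (inl s' : dev I S) \in p)].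

Lemma reach_inv I S t M : M \in reachable I S t -> Inv t M.
Proof.
elim: t M => [|t IH] M /=.
  rewrite inE => /eqP ->; split => [p||s] //; first by rewrite inE.
  by apply: pdisjI => p q x; rewrite inE.
case: insubP => [i _ vi|nt].
  case/bigcupP => M0 M0R; have [H1 H2 H3] := IH _ M0R.
  rewrite /step; case: ifP => [C|C].
    rewrite inE => /eqP ->; split => //.
      move=> p /H1 [-> [s [st sp]]]; split => //; exists s; split => //; exact: ltnW.
    move=> s; rewrite ltnS leq_eqVlt => /orP [/eqP st|st]; last exact: H3.
    have si : s = i by apply: val_inj; rewrite /= st vi.
    subst s => np; move: C; rewrite (negbTE np) /= => /eqP U0; split.
      move=> y ny; case E: (paired M0 y) => //.
      have : y \in [set y | (y != inl i) && ~~ paired M0 y] by rewrite inE ny E.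
      by rewrite U0 inE.
    by move=> p /H1 [_ [s' [s't s'p]]]; exists s'; rewrite vi.
  case/imsetP => y; rewrite inE => /andP [nyi npy] ->.
  move: C => /negbT; rewrite negb_or => /andP [npi _].
  have dM0 := H2.
  have sub : forall x, paired M0 x -> paired ([set inl i; y] |: M0) x.
    by move=> x /pairedP [p pM xp]; apply/pairedP; exists p; rewrite // in_setU1 pM orbT.
  split.
  - move=> p; rewrite in_setU1 => /orP [/eqP ->|/H1 [-> [s [st sp]]]].
      split; first by rewrite cards2 eq_sym nyi.
      by exists i; rewrite vi ltnSn !inE eqxx.
    by split => //; exists s; split => //; exact: ltnW.
  - apply: pdisjI => p q x; rewrite !in_setU1.
    case/orP => [/eqP ->|pM]; case/orP => [/eqP ->|qM] //.
    + move=> xp xq; exfalso; move: xp; rewrite !inE => /orP [] /eqP E; subst x.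
        by move/negP: npi; apply; apply/pairedP; exists q.
      by move/negP: npy; apply; apply/pairedP; exists q.
    + move=> xq xp; exfalso; move: xp; rewrite !inE => /orP [] /eqP E; subst x.
        by move/negP: npi; apply; apply/pairedP; exists p.
      by move/negP: npy; apply; apply/pairedP; exists p.
    + exact: pdisjP dM0 pM qM.
  - move=> s st nps; exfalso; move/negP: nps; apply.
    case: (eqVneq s i) => [->|nsi].
      by apply/pairedP; exists [set inl i; y]; rewrite ?setU11 // !inE eqxx.
    have st' : (s < t)%N.
      move: st; rewrite ltnS leq_eqVlt => /orP [/eqP E|//].
      by case/eqP: nsi; apply: val_inj; rewrite /= E vi.
    apply: sub; case E: (paired M0 (inl s)) => //.
    have nps0 : ~~ paired M0 (inl s) by rewrite E.
    have [H _] := H3 s st' nps0.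
    have : inl i != inl s :> dev I S by apply/eqP => [[E']]; rewrite E' eqxx in nsi.
    by move/H; rewrite (negbTE npi).
move=> MR; have [H1 H2 H3] := IH _ MR; split => //.
  move=> p /H1 [-> [s [st sp]]]; split => //; exists s; split => //; exact: ltnW.
move=> s _; apply: H3; move: nt; rewrite -leqNgt => /(leq_trans (ltn_ord s)) //.
Qed.

Lemma pair_eq (T : finType) (p : {set T}) a b :
  #|p| = 2 -> a \in p -> b \in p -> a != b -> p = [set a; b].
Proof.
move=> cp ap bp nab; apply/eqP; rewrite eq_sym eqEcard cp cards2 nab andbT.
by rewrite subUset !sub1set ap bp.
Qed.

Lemma reach_suff I S (h0 : 'I_I) (M : {set {set dev I S}}) :
  (forall p, p \in M -> #|p| = 2 /\ exists s : 'I_I, (s < h0)%N /\ (inl s : dev I S) \in p) ->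
  pdisj M -> (forall y, paired M y = (y != inl h0)) -> M \in reachable I S I.
Proof.
move=> H1 dM H3.
pose Mt t := [set p in M | [exists s : 'I_I, (s < t)%N && ((inl s : dev I S) \in p)]].
have MtM : forall t p, p \in Mt t -> p \in M by move=> t p; rewrite inE => /andP [].
have pMt : forall t x, paired (Mt t) x -> paired M x.
  by move=> t x /pairedP [p /MtM pM xp]; apply/pairedP; exists p.
suff : forall t, (t <= I)%N -> Mt t \in reachable I S t.
  move=> /(_ I (leqnn I)); suff -> : Mt I = M by [].
  apply/setP => p; rewrite inE.
  case pM: (p \in M) => //=; case: (H1 p pM) => _ [s [_ sp]].
  by apply/existsP; exists s; rewrite ltn_ord sp.
elim => [_|t IH tI] /=.
  rewrite inE; apply/eqP/setP => p; rewrite !inE.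
  by apply/negbTE; rewrite negb_and; apply/orP; right; apply/existsP => [[s]].
case: insubP => [i _ vi|]; last by rewrite tI.
apply/bigcupP; exists (Mt t); first exact: IH (ltnW tI).
have si : forall s : 'I_I, (s < t.+1)%N = ((s < t)%N || (s == i)).
  move=> s; rewrite ltnS leq_eqVlt orbC; congr (_ || _).
  by apply/eqP/eqP => [E|->//]; apply: val_inj; rewrite /= E.
rewrite /step; case: (boolP (paired M (inl i))) => [/pairedP [p pM ip]|npi].
  case: (boolP (paired (Mt t) (inl i))) => [/pairedP [q qMt iq]|npit].
    rewrite /= inE; apply/eqP/setP => r; rewrite !inE; case rM: (r \in M) => //=.
    apply/existsP/existsP => [[s /andP [+ sr]]|[s /andP [st sr]]]; last first.
      by exists s; rewrite si st.
    rewrite si => /orP [st|/eqP E]; first by exists s; rewrite st.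
    subst s; have E := pdisjP dM rM (MtM _ _ qMt) sr iq; subst r.
    by move: qMt; rewrite inE => /andP [_ /existsP].
  case: (H1 p pM) => /eqP/cards2P [a [b [nab pab]]] _.
  have [y [pE nyi]] : exists y, p = [set inl i; y] /\ y != inl i.
    rewrite pab; move: ip nab; rewrite pab !inE => /orP [] /eqP <- nab'.
      by exists b; split; rewrite // eq_sym.
    by exists a; split; rewrite // setUC.
  have npy : ~~ paired (Mt t) y.
    apply/negP => /pairedP [q qMt yq].
    have yp : y \in p by rewrite pE !inE eqxx orbT.
    have E := pdisjP dM (MtM _ _ qMt) pM yq yp.
    by move/negP: npit; apply; apply/pairedP; exists q; rewrite // E.
  case: ifP => [/orP [pit|/eqP U0]|_].
  - by move: pit.
  - by move/setP/(_ y): U0; rewrite !inE nyi npy.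
  apply/imsetP; exists y; first by rewrite inE nyi npy.
  apply/setP => r; rewrite !inE.
  case: (eqVneq r [set inl i; y]) => [->|nr] /=.
    rewrite -pE pM /=; apply/existsP; exists i; by rewrite vi ltnSn ip.
  case rM: (r \in M) => //=.
  apply/existsP/existsP => [[s /andP [+ sr]]|[s /andP [st sr]]]; last first.
    by exists s; rewrite si st.
  rewrite si => /orP [st|/eqP E]; first by exists s; rewrite st.
  subst s; have E := pdisjP dM rM pM sr ip; by rewrite E pE eqxx in nr.
have ih : inl i = inl h0 :> dev I S by apply/eqP; move: npi; rewrite H3 negbK.
case: ifP => [_|/negbT]; last first.
  rewrite negb_or => /andP [_ /set0Pn [y]]; rewrite inE => /andP [nyi npy].
  exfalso; move/negP: npy; apply.
  have : paired M y by rewrite H3 -ih.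
  case/pairedP => q qM yq; apply/pairedP; exists q => //.
  rewrite inE qM; case: (H1 q qM) => _ [s [sh sq]]; apply/existsP; exists s.
  rewrite sq andbT; case: ih => ih; rewrite -vi ih //.
rewrite inE; apply/eqP/setP => r; rewrite !inE; case rM: (r \in M) => //=.
apply/existsP/existsP => [[s /andP [+ sr]]|[s /andP [st sr]]]; last first.
  by exists s; rewrite si st.
rewrite si => /orP [st|/eqP E]; first by exists s; rewrite st.
subst s; exfalso; move/negP: npi; apply; apply/pairedP; by exists r.
Qed.


Definition Aset I S (i : 'I_I) : {set dev I S} :=
  [set x : dev I S | if x is inl a then (a < i)%N else false].
Definition Lset I S (i : 'I_I) : {set dev I S} :=
  [set x : dev I S | if x is inl a then (i < a)%N else false].
Definition Wset I S : {set dev I S} := [set x | ~~ infected x].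

Lemma card_dev I S : #|{: dev I S}| = I + S.
Proof. by rewrite card_sum !card_ord. Qed.

Lemma card_W I S : #|Wset I S| = S.
Proof.
have -> : Wset I S = [set inr w | w : 'I_S].
  apply/setP => x; rewrite !inE; case: x => [a|w] /=.
    by apply/esym/negbTE/imsetP => [[w _]].
  by apply/esym/imsetP; exists w.
by rewrite card_imset ?card_ord //; move=> a b [].
Qed.

Lemma card_AL I S (i : 'I_I) : #|Aset S i :|: Lset S i| = I.-1.
Proof.
have -> : Aset S i :|: Lset S i = [set inl a | a in [set~ i]].
  apply/setP => x; rewrite !inE; case: x => [a|w] /=.
    rewrite (mem_imset _ _ (@inl_inj _ _)) !inE.
    by rewrite neq_ltn.
  by apply/esym/negbTE/imsetP => [[a _]].
by rewrite card_imset ?cardsC1 ?card_ord //; move=> a b [].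
Qed.

Lemma sum_const2 (T : finType) (M : {set {set T}}) :
  (forall p, p \in M -> #|p| = 2) -> \sum_(p in M) #|p :&: setT| = 2 * #|M|.
Proof.
move=> H; rewrite (eq_bigr (fun _ => 2)); first by rewrite sum_nat_const mulnC.
by move=> p /H; rewrite setIT.
Qed.

Lemma dir_a I S (i : 'I_I) M : (S < I)%N ->
  possible_wiring M -> ~~ paired M (inl i : dev I S) ->
  good (Aset S i) (Lset S i) (bb_pairings M) && (#|bb_pairings M| == (I - S - 1) %/ 2).
Proof.
move=> SI MR npi; have [H1 dM H3] := reach_inv MR.
have [allp pairs] := H3 i (ltn_ord i) npi.
set B := bb_pairings M.
have BM : forall p, p \in B -> p \in M by move=> p; rewrite inE => /andP [].
have pairedE : forall x, paired M x = (x != inl i).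
  move=> x; case: eqVneq => [->|nx]; first by rewrite (negbTE npi).
  exact: allp.
have shape : forall p, p \in M -> exists s : 'I_I, exists x, [/\ (s < i)%N, x != inl s & p = [set inl s; x]].
  move=> p pM; have [c2 _] := H1 p pM; have [s [si sp]] := pairs p pM.
  move: (c2) => /eqP/cards2P [a [b [nab pab]]].
  move: sp; rewrite pab !inE => /orP [] /eqP E; exists s.
    by exists b; rewrite E eq_sym; split.
  by exists a; rewrite E setUC; split.
apply/andP; split.
  apply: goodI.
  - move=> p pB; have pM := BM p pB; have [c2 _] := H1 p pM; split => //.
      apply/subsetP => x xp; have : paired M x by apply/pairedP; exists p.
      rewrite pairedE; move: pB; rewrite inE => /andP [_ /forallP /(_ x)].
      rewrite xp /=; case: x xp => [a|w] //= _ _ nai.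
      rewrite !inE; rewrite neq_ltn in nai; case/orP: nai => ->; rewrite ?orbT //.
    have [s [si sp]] := pairs p pM; exists (inl s) => //; by rewrite inE.
  - apply: pdisjI => p q x pB qB; exact: pdisjP dM (BM _ pB) (BM _ qB).
  - move=> x; rewrite inE; case: x => [a|w] //= ia.
    have : paired M (inl a) by rewrite pairedE; apply/eqP => [[E]]; rewrite E ltnn in ia.
    case/pairedP => p pM ap; exists p => //.
    have [s [x [si nxs pE]]] := shape p pM.
    rewrite inE pM /=; apply/forallP => y; apply/implyP.
    move: ap; rewrite pE !inE => /orP [/eqP [E]|/eqP <-].
      by rewrite E ltnNge (ltnW si) in ia.
    by case/orP => /eqP ->.
have E1 := sum_card_cover setT dM; rewrite sum_const2 in E1; last by move=> p /H1 [].
have C1 : #|[set x in setT | [exists p in M, x \in p]]| = (I + S).-1.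
  rewrite -card_dev -(cardsC1 (inl i : dev I S)); apply: eq_card => x; rewrite !inE.
  exact: (pairedE x).
rewrite C1 in E1.
have E2 := sum_card_cover (Wset I S) dM.
have C2 : #|[set x in Wset I S | [exists p in M, x \in p]]| = S.
  transitivity #|Wset I S|; last exact: card_W.
  apply: eq_card => x; rewrite !inE.
  case: x => [a|w] //=; by rewrite -/(paired M _) pairedE.
rewrite C2 in E2.
have E3 : \sum_(p in M) #|p :&: Wset I S| = #|M :\: B|.
  rewrite -sum1_card [RHS]big_mkcond /= [LHS]big_mkcond /=; apply: eq_bigr => p _.
  rewrite !inE; case pM: (p \in M); rewrite ?andbF ?andbT //=.
  have [s [x [si nxs pE]]] := shape p pM.
  case: x nxs pE => [a|w] _ ->.
    have -> : [forall x in ([set inl s; inl a] : {set dev I S}), infected x].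
      by apply/forallP => y; apply/implyP; rewrite !inE => /orP [] /eqP ->.
    rewrite /=; apply/eqP; rewrite cards_eq0; apply/eqP/setP => y; rewrite !inE.
    by case: y => [b|v] //=; rewrite andbF.
  have -> : [forall x in ([set inl s; inr w] : {set dev I S}), infected x] = false.
    by apply/negbTE/forallP => /(_ (inr w)); rewrite !inE eqxx orbT.
  have -> : ([set inl s; inr w] : {set dev I S}) :&: Wset I S = [set inr w].
    apply/setP => y; rewrite !inE; case: y => [b|v] /=.
      by rewrite andbF; case: eqP.
    by rewrite andbT; case: eqP => // E; case: eqP.
  by rewrite cards1.
have C3 : #|M| = #|B| + #|M :\: B|.
  rewrite -(cardsID B M); congr (_ + _); apply: eq_card => p; rewrite !inE.
  by case pM: (p \in M); rewrite ?andbF ?andbT.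
rewrite E3 in E2.
apply/eqP; lia.
Qed.

Lemma dir_b I S (i : 'I_I) (B : {set {set dev I S}}) : (S < I)%N -> odd (I + S) ->
  good (Aset S i) (Lset S i) B -> #|B| = (I - S - 1) %/ 2 ->
  exists M, possible_wiring M && ~~ paired M (inl i : dev I S) && (B == bb_pairings M).
Proof.
move=> SI oIS gB cB.
have dB := good_disj gB.
set A := Aset S i; set L := Lset S i.
set U := (A :|: L) :\: [set x | paired B x].
have pairedB : forall x, paired B x -> x \in A :|: L.
  move=> x /pairedP [p pB xp]; have [_ /subsetP sp _] := good_pair gB pB; exact: sp.
have cU : #|U| = S.
  have E1 := sum_card_cover setT dB; rewrite sum_const2 in E1; last by move=> p /(good_pair gB) [].
  have Ec : [set x in setT | [exists p in B, x \in p]] = (A :|: L) :&: [set x | paired B x].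
    apply/setP => x; rewrite !inE -/(paired B x); case px: (paired B x); rewrite ?andbF ?andbT //.
    by move/pairedB: px; rewrite !inE => ->.
  rewrite Ec in E1; rewrite /U cardsD -E1 card_AL cB.
  have := odd_double_half (I + S); rewrite oIS -muln2 => Hq.
  lia.
have UA : forall x, x \in U -> exists2 a : 'I_I, (a < i)%N & x = inl a.
  move=> x; rewrite !inE => /andP [npx].
  case: x npx => [a|w] //= npx /orP [ai|ia]; first by exists a.
  case/negP: npx; have : (inl a : dev I S) \in L by rewrite inE.
  by case/(good_cov gB) => p pB ap; apply/pairedP; exists p.
pose u (w : 'I_S) : dev I S := enum_val (cast_ord (esym cU) w).
have uU : forall w, u w \in U by move=> w; exact: enum_valP.
have u_inj : injective u by move=> w1 w2 /enum_val_inj /cast_ord_inj.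
have u_surj : forall x, x \in U -> exists w, u w = x.
  move=> x xU; exists (cast_ord cU (enum_rank_in xU x)).
  by rewrite /u cast_ordK enum_rankK_in.
have unp : forall w, ~~ paired B (u w) by move=> w; move: (uU w); rewrite !inE => /andP [].
have uinf : forall w, infected (u w) by move=> w; case: (UA _ (uU w)) => a _ ->.
pose C := [set ([set u w; inr w] : {set dev I S}) | w : 'I_S].
pose M := B :|: C.
have inM : forall p, p \in M = (p \in B) || [exists w, p == [set u w; inr w]].
  move=> p; rewrite inE; congr (_ || _); apply/imsetP/existsP => [[w _ ->]|[w /eqP ->]].
    by exists w.
  by exists w.
have pairedM : forall y, paired M y = (y != inl i).
  move=> y; apply/pairedP/idP => [[p] |].
    rewrite inM => /orP [pB yp|/existsP [w /eqP ->]].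
      have := pairedB y (introT (pairedP _ _) (ex_intro2 _ _ p pB yp)).
      rewrite !inE; case: y {yp} => [a|w] //= /orP [] H; apply/eqP => [[E]];
        by rewrite E ltnn in H.
    rewrite !inE => /orP [] /eqP ->; last by [].
    case: (UA _ (uU w)) => a ai ->; apply/eqP => [[E]]; by rewrite E ltnn in ai.
  case: y => [a|w] nai.
    have : (inl a : dev I S) \in A :|: L.
      have nai' : a != i by apply: contraNneq nai => ->.
      by rewrite !inE; rewrite neq_ltn in nai'.
    move=> aAL; case pa: (paired B (inl a)).
      by case/pairedP: pa => p pB ap; exists p; rewrite // inM pB.
    have : (inl a : dev I S) \in U by rewrite /U in_setD in_set pa aAL.
    case/u_surj => w uw; exists [set u w; inr w]; last by rewrite -uw !inE eqxx.
    by rewrite inM; apply/orP; right; apply/existsP; exists w.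
  exists [set u w; inr w]; last by rewrite !inE eqxx orbT.
  by rewrite inM; apply/orP; right; apply/existsP; exists w.
exists M.
have npi : ~~ paired M (inl i : dev I S) by rewrite pairedM eqxx.
rewrite npi andbT; apply/andP; split.
  apply: (reach_suff (h0 := i)).
  - move=> p; rewrite inM => /orP [pB|/existsP [w /eqP ->]].
      have [c2 _ [a aA ap]] := good_pair gB pB; split => //.
      move: aA; rewrite inE; case: a ap => [a|w] //= ap ai; by exists a.
    split; first by rewrite cards2; case: (u w) (uinf w).
    case: (UA _ (uU w)) => a ai ua; exists a; by rewrite -ua !inE eqxx.
  - apply: pdisjI => p q x; rewrite !inM.
    case/orP => [pB|/existsP [w /eqP ->]]; case/orP => [qB|/existsP [v /eqP ->]].
    + exact: pdisjP dB pB qB.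
    + move=> xp; rewrite !inE => /orP [] /eqP E; subst x; last first.
        have [_ /subsetP /(_ _ xp) + _] := good_pair gB pB.
        by rewrite !inE.
      by case/negP: (unp v); apply/pairedP; exists p.
    + move=> + xq; rewrite !inE => /orP [] /eqP E; subst x; last first.
        have [_ /subsetP /(_ _ xq) + _] := good_pair gB qB.
        by rewrite !inE.
      by case/negP: (unp w); apply/pairedP; exists q.
    + rewrite !inE => /orP [] /eqP -> /orP [] /eqP.
      * by move/u_inj => ->.
      * by move: (uinf w); case: (u w).
      * by move=> E; move: (uinf v); rewrite -E.
      * by case=> ->.
  - exact: pairedM.
apply/eqP/setP => p; rewrite inE inM.
case pB: (p \in B) => /=.
  apply/esym/forallP => x; apply/implyP => xp.
  have [_ /subsetP /(_ _ xp) + _] := good_pair gB pB.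
  by rewrite !inE; case: x {xp}.
apply/esym/negbTE; rewrite negb_and; apply/orP; case: existsP => [[w /eqP ->]|]; last by left.
right; apply/negP => /forallP /(_ (inr w)); by rewrite !inE eqxx orbT.
Qed.


Lemma card_A I S (i : 'I_I) : #|Aset S i| = i.
Proof.
have le : (i <= I)%N by apply: ltnW.
have -> : Aset S i = [set (inl (widen_ord le b) : dev I S) | b : 'I_i].
  apply/setP => x; rewrite /Aset !inE; case: x => [a|w] /=.
    apply/idP/imsetP => [ai|[b _ [->]]] /=; last by [].
    by exists (Ordinal ai) => //; congr inl; apply: val_inj.
  by apply/esym/negbTE/imsetP => [[b _]].
by rewrite card_imset ?card_ord // => b c [] E; apply: val_inj.
Qed.

Lemma disj_AL I S (i : 'I_I) : [disjoint Aset S i & Lset S i].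
Proof.
apply/pred0P => x /=; rewrite /Aset /Lset !inE; case: x => [a|w] //=.
by case: (ltngtP a i).
Qed.

Lemma card_L I S (i : 'I_I) : #|Lset S i| = I.-1 - i.
Proof.
have := card_AL S i; rewrite cardsU (disjoint_setI0 (disj_AL S i)) cards0 subn0 card_A.
lia.
Qed.

Lemma N_formula I S h : (S < I)%N -> odd (I + S) -> (1 <= h)%N -> (h <= I)%N ->
  N_dagger I S h = if (I - h <= (I - S - 1) %/ 2)%N then
     (h.-1) ^_ (I - h) * mt (h.-1 - (I - h)) ((I - S - 1) %/ 2 - (I - h)) else 0.
Proof.
move=> SI oIS h1 hI; rewrite /N_dagger; case: insubP => [i _ vi|]; last first.
  by move/negP; case; lia.
transitivity (cnt (Aset S i) (Lset S i) ((I - S - 1) %/ 2)).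
  apply: eq_card => B; rewrite !inE; apply/existsP/idP => [[M]|].
    case/andP => /andP [MR npi] /eqP ->; exact: dir_a.
  case/andP => gB /eqP cB; have [M HM] := dir_b SI oIS gB cB; by exists M.
rewrite cnt_formula ?disj_AL // card_A card_L vi.
have -> : (I.-1 - h.-1 = I - h)%N by lia.
by [].
Qed.

Unset Implicit Arguments.
Import GRing.Theory Num.Theory.
Local Open Scope ring_scope.

Lemma ratE (k m : nat) :
  (mt m k)%:R = (k`!)%:R^-1 * \prod_(t < k) ('C(m - 2 * t, 2))%:R :> rat.
Proof.
rewrite -natr_prod -mt_prod natrM mulrA mulVf ?mul1r //.
by rewrite pnatr_eq0 -lt0n fact_gt0.
Qed.

Lemma ffact_rat (h l : nat) :
  ((h.-1) ^_ l)%:R = \prod_(1 <= t < l.+1) (h - t)%:R :> rat.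
Proof.
rewrite ffact_prod natr_prod big_add1 /= big_mkord; apply: eq_bigr => t _.
congr (_%:R); lia.
Qed.

Theorem lemma3 (I S j : nat) :
  (2 <= j)%N -> (S < I)%N -> odd (I + S) -> j = ((I - S - 1) %/ 2)%N ->
  [/\ ((N_dagger I S I)%:R = (j`!)%:R^-1 *
        \prod_(k < j) ('C(I - 1 - 2 * k, 2))%:R :> rat),
      ((N_dagger I S I.-1)%:R = ((j.-1)`!)%:R^-1 * (I - 2)%:R *
        \prod_(k < j.-1) ('C(I - 3 - 2 * k, 2))%:R :> rat),
      (forall h, (S + 1 <= h)%N -> (h <= I - 2)%N ->
         [/\ ((j < I - h)%N -> N_dagger I S h = 0%N),
             (j = (I - h)%N -> (N_dagger I S h)%:R =
               ((j - (I - h))`!)%:R^-1 * \prod_(1 <= t < (I - h).+1) (h - t)%:R :> rat)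
           & ((I - h < j)%N -> (N_dagger I S h)%:R =
               ((j - (I - h))`!)%:R^-1 * \prod_(1 <= t < (I - h).+1) (h - t)%:R *
               \prod_(1 <= t < (j - (I - h)).+1) ('C(2 * h - I - 1 - 2 * (t - 1), 2))%:R :> rat)])
    & (forall h, (1 <= h)%N -> (h <= S)%N -> N_dagger I S h = 0%N)].
Proof.
move=> j2 SI oIS Hj.
have I5 : (S + 5 <= I)%N by lia.
split.
- rewrite N_formula //; last by lia.
  rewrite -Hj subnn leq0n ffactn0 mul1n !subn0 ratE.
  congr (_ * _); apply: eq_bigr => k _; congr (_%:R); congr 'C(_, 2); lia.
- rewrite N_formula //; try lia.
  have -> : (I - I.-1 = 1)%N by lia.
  rewrite -Hj (_ : (1 <= j)%N) ?ffactn1; last by lia.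
  rewrite natrM ratE mulrCA mulrA.
  have -> : (j - 1 = j.-1)%N by lia.
  congr (_ * _ * _).
    congr (_%:R); lia.
  apply: eq_bigr => k _; congr (_%:R); congr 'C(_, 2); lia.
- move=> h h1 h2; rewrite N_formula //; try lia.
  rewrite -Hj; split.
  + by move=> jl; rewrite leqNgt jl.
  + move=> jl; rewrite -jl leqnn subnn mt0 muln1 ffact_rat mul1r.
    by [].

  + move=> jl; rewrite (ltnW jl) natrM ffact_rat ratE mulrCA mulrA.
    congr (_ * _); rewrite big_add1 /= big_mkord; apply: eq_bigr => t _; congr (_%:R); congr 'C(_, 2); lia.
- move=> h h1 hS; rewrite N_formula //; try lia.
  by rewrite -Hj ifF //; apply/negbTE; rewrite -ltnNge; lia.
Qed.
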